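(* Let $(\mathcal{C},P)$ be a primary doctrine with comprehension and negation. Then: (i) $(\mathcal{C},P)$ has co-comprehension, given by $\lceil\alpha\rceil:=\lfloor\neg\alpha\rfloor:\{\neg\alpha\}\to A$; (ii) if $(\mathcal{C},P)$ is a restricted $\Sigma(\mathcal{C}_P)$-doctrine, then it is also a restricted $\Sigma(\mathcal{C}_P^o)$-doctrine; (iii) if $(\mathcal{C},P)$ has full comprehension, then $(\mathcal{C},P)$ has full co-comprehension if and only if it is classical.
   Context: A doctrine is a pair $(\mathcal{C},P)$, $\mathcal{C}$ a category with finite products, $P:\mathcal{C}^{op}\to\mathbf{Pos}$ a functor, $f^*=P(f)$; primary means each $P(A)$ has binary meets preserved by each $f^*$. It has negation if each $P(A)$ has a bottom $\bot_A$ and an operation $\neg:P(A)\to P(A)$ with $\alpha\le\neg\beta$ iff $\alpha\wedge\beta=\bot_A$; reindexing maps are understood to preserve top, bottom and negation ($f^*\neg\alpha=\neg f^*\alpha$). It is classical if moreover $\neg\neg\alpha=\alpha$. Comprehension: every $P(A)$ has a top $\top_A$ and for each $\alpha\in P(A)$ there is $\lfloor\alpha\rfloor:\{\alpha\}\to A$ with $\lfloor\alpha\rfloor^*\alpha=\top$ such that every $f:Y\to A$ with $f^*\alpha=\top_Y$ factors uniquely through $\lfloor\alpha\rfloor$; full if whenever $\lfloor\alpha\rfloor$ factors through $\lfloor\beta\rfloor$ then $\alpha\le\beta$. Co-comprehension: every $P(A)$ has a bottom $\bot_A$ and for each $\alpha\in P(A)$ there is $\lceil\alpha\rceil:\{\alpha\}^o\to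 A$ with $\lceil\alpha\rceil^*\alpha=\bot$ such that every $f:Y\to A$ with $f^*\alpha=\bot_Y$ factors uniquely as $f=\lceil\alpha\rceil k$; these arrows are monic and $\alpha\le\beta$ implies $\lceil\beta\rceil$ factors through $\lceil\alpha\rceil$; co-comprehension is full if conversely whenever $\lceil\beta\rceil$ factors through $\lceil\alpha\rceil$ then $\alpha\le\beta$. $\mathcal{C}_P$ (resp. $\mathcal{C}_P^o$) is the pullback-stable class of arrows of the form $\lfloor\alpha\rfloor$ (resp. $\lceil\alpha\rceil$). For a pullback-stable class $\mathcal{A}$, a restricted $\Sigma(\mathcal{A})$-doctrine is one where each $f^*$ with $f:A\to B$ in $\mathcal{A}$ has a left adjoint $\Sigma_f$ (i.e. $\alpha\le f^*\Sigma_f\alpha$, $\Sigma_ff^*\beta\le\beta$) and for every pullback square $h\circ g=f\circ k$ and every $\xi\in P(B)$, $h^*\Sigma_ff^*\xi=\Sigma_gk^*f^*\xi$. *)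

(* Defs.v *)
Set Implicit Arguments.
Unset Strict Implicit.

Record Category := {
  Ob : Type;
  Hom : Ob -> Ob -> Type;
  idm : forall A, Hom A A;
  comp : forall A B D, Hom B D -> Hom A B -> Hom A D;
  comp_id_l : forall A B (f : Hom A B), comp (idm B) f = f;
  comp_id_r : forall A B (f : Hom A B), comp f (idm A) = f;
  comp_assoc : forall A B D E (f : Hom A B) (g : Hom B D) (h : Hom D E),
      comp h (comp g f) = comp (comp h g) f
}.
Arguments Hom : clear implicits.
Arguments idm {c} A.
Arguments comp {c A B D} _ _.

Definition is_terminal (C : Category) (T : Ob C) : Prop :=
  forall X : Ob C, exists f : Hom C X T, forall g : Hom C X T, g = f.

Definition is_product (C : Category) (A B P : Ob C)
  (p1 : Hom C P A) (p2 : Hom C P B) : Prop :=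
  forall (X : Ob C) (f : Hom C X A) (g : Hom C X B),
    exists! h : Hom C X P, comp p1 h = f /\ comp p2 h = g.

Definition has_finite_products (C : Category) : Prop :=
  (exists T : Ob C, is_terminal T) /\
  (forall A B : Ob C, exists (P : Ob C) (p1 : Hom C P A) (p2 : Hom C P B),
      is_product p1 p2).

Definition is_iso (C : Category) (X Y : Ob C) (h : Hom C X Y) : Prop :=
  exists h' : Hom C Y X, comp h' h = idm X /\ comp h h' = idm Y.

Definition is_monic (C : Category) (X A : Ob C) (m : Hom C X A) : Prop :=
  forall (Z : Ob C) (u v : Hom C Z X), comp m u = comp m v -> u = v.

Definition is_pullback (C : Category) (A B A' B' : Ob C)
  (f : Hom C A B) (k : Hom C A' A) (g : Hom C A' B') (h : Hom C B' B) : Prop :=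
  comp h g = comp f k /\
  forall (Z : Ob C) (u : Hom C Z B') (v : Hom C Z A),
    comp h u = comp f v ->
    exists! w : Hom C Z A', comp g w = u /\ comp k w = v.

Record Doctrine (C : Category) := {
  Pr : Ob C -> Type;
  le : forall A, Pr A -> Pr A -> Prop;
  le_refl : forall A (a : Pr A), le a a;
  le_trans : forall A (a b c : Pr A), le a b -> le b c -> le a c;
  le_antisym : forall A (a b : Pr A), le a b -> le b a -> a = b;
  reindex : forall A B, Hom C A B -> Pr B -> Pr A;
  reindex_mono : forall A B (f : Hom C A B) (a b : Pr B),
      le a b -> le (reindex f a) (reindex f b);
  reindex_id : forall A (a : Pr A), reindex (idm A) a = a;
  reindex_comp : forall A B D (f : Hom C A B) (g : Hom C B D) (a : Pr D),
      reindex (comp g f) a = reindex f (reindex g a)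
}.
Arguments Pr {C} d A.
Arguments le {C d A} _ _.
Arguments reindex {C d A B} _ _.

Unset Implicit Arguments.
Section DoctrineProps.
Context {C : Category}.
Variable D : Doctrine C.

Definition is_primary (meet : forall A, Pr D A -> Pr D A -> Pr D A) : Prop :=
  (forall A (a b : Pr D A), le (meet A a b) a /\ le (meet A a b) b) /\
  (forall A (a b c : Pr D A), le c a -> le c b -> le c (meet A a b)) /\
  (forall A B (f : Hom C A B) (a b : Pr D B),
      reindex f (meet B a b) = meet A (reindex f a) (reindex f b)).

Definition has_negation (meet : forall A, Pr D A -> Pr D A -> Pr D A)
  (bot : forall A, Pr D A) (neg : forall A, Pr D A -> Pr D A) : Prop :=
  (forall A (a : Pr D A), le (bot A) a) /\
  (forall A (a b : Pr D A), le a (neg A b) <-> meet A a b = bot A) /\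
  (forall A B (f : Hom C A B), reindex f (bot B) = bot A) /\
  (forall A B (f : Hom C A B) (a : Pr D B),
      reindex f (neg B a) = neg A (reindex f a)).

Definition is_classical (neg : forall A, Pr D A -> Pr D A) : Prop :=
  forall A (a : Pr D A), neg A (neg A a) = a.

(* comprehension: {a} and  floor a : {a} -> A *)
Definition has_comprehension (top : forall A, Pr D A)
  (cob : forall A, Pr D A -> Ob C)
  (carr : forall A (a : Pr D A), Hom C (cob A a) A) : Prop :=
  (forall A (a : Pr D A), le a (top A)) /\
  (forall A B (f : Hom C A B), reindex f (top B) = top A) /\
  (forall A (a : Pr D A), reindex (carr A a) a = top (cob A a)) /\
  (forall A (a : Pr D A) (Y : Ob C) (f : Hom C Y A),
      reindex f a = top Y ->
      exists! k : Hom C Y (cob A a), f = comp (carr A a) k).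

Definition full_comprehension (cob : forall A, Pr D A -> Ob C)
  (carr : forall A (a : Pr D A), Hom C (cob A a) A) : Prop :=
  forall A (a b : Pr D A),
    (exists k : Hom C (cob A a) (cob A b), carr A a = comp (carr A b) k) ->
    le a b.

(* co-comprehension: {a}^o and  ceil a : {a}^o -> A *)
Definition has_cocomprehension (bot : forall A, Pr D A)
  (cob : forall A, Pr D A -> Ob C)
  (carr : forall A (a : Pr D A), Hom C (cob A a) A) : Prop :=
  (forall A (a : Pr D A), le (bot A) a) /\
  (forall A (a : Pr D A), reindex (carr A a) a = bot (cob A a)) /\
  (forall A (a : Pr D A) (Y : Ob C) (f : Hom C Y A),
      reindex f a = bot Y ->
      exists! k : Hom C Y (cob A a), f = comp (carr A a) k) /\
  (forall A (a : Pr D A), is_monic (carr A a)) /\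
  (forall A (a b : Pr D A), le a b ->
      exists k : Hom C (cob A b) (cob A a), carr A b = comp (carr A a) k).

Definition full_cocomprehension (cob : forall A, Pr D A -> Ob C)
  (carr : forall A (a : Pr D A), Hom C (cob A a) A) : Prop :=
  forall A (a b : Pr D A),
    (exists k : Hom C (cob A b) (cob A a), carr A b = comp (carr A a) k) ->
    le a b.

(* the class of arrows of the form carr A a (up to isomorphism of domains,
   which makes it pullback-stable) *)
Definition arrow_class (cob : forall A, Pr D A -> Ob C)
  (carr : forall A (a : Pr D A), Hom C (cob A a) A)
  (X A : Ob C) (m : Hom C X A) : Prop :=
  exists (a : Pr D A) (i : Hom C X (cob A a)), is_iso i /\ m = comp (carr A a) i.

(* restricted Sigma(cls)-doctrine; Sigma is a total operation whose
   properties are only required on arrows of the class *)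
Definition restricted_Sigma
  (cls : forall X A : Ob C, Hom C X A -> Prop)
  (Sigma : forall A B, Hom C A B -> Pr D A -> Pr D B) : Prop :=
  (forall A B (f : Hom C A B), cls A B f ->
     (forall a : Pr D A, le a (reindex f (Sigma A B f a))) /\
     (forall b : Pr D B, le (Sigma A B f (reindex f b)) b)) /\
  (forall A B A' B' (f : Hom C A B) (k : Hom C A' A) (g : Hom C A' B')
          (h : Hom C B' B),
     cls A B f -> is_pullback f k g h ->
     forall xi : Pr D B,
       reindex h (Sigma A B f (reindex f xi)) =
       Sigma A' B' g (reindex k (reindex f xi))).

End DoctrineProps.

(* Main.v *)
Require Import Defs.

Theorem mainTheorem4
  (C : Category) (HC : has_finite_products C) (D : Doctrine C)
  (meet : forall A, Pr D A -> Pr D A -> Pr D A)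
  (top bot : forall A, Pr D A)
  (neg : forall A, Pr D A -> Pr D A)
  (cob : forall A, Pr D A -> Ob C)
  (carr : forall A (a : Pr D A), Hom C (cob A a) A)
  (Hprim : is_primary D meet)
  (Hneg : has_negation D meet bot neg)
  (Hcomp : has_comprehension D top cob carr) :
  (* (i) *)
  has_cocomprehension D bot (fun A a => cob A (neg A a))
                            (fun A a => carr A (neg A a))
  (* (ii) *)
  /\ (forall Sigma : forall A B, Hom C A B -> Pr D A -> Pr D B,
        restricted_Sigma D (arrow_class D cob carr) Sigma ->
        exists Sigma' : forall A B, Hom C A B -> Pr D A -> Pr D B,
          restricted_Sigma D
            (arrow_class D (fun A a => cob A (neg A a))
                           (fun A a => carr A (neg A a))) Sigma')
  (* (iii) *)
  /\ (full_comprehension D cob carr ->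
        ((exists (cob' : forall A, Pr D A -> Ob C)
                 (carr' : forall A (a : Pr D A), Hom C (cob' A a) A),
             has_cocomprehension D bot cob' carr' /\
             full_cocomprehension D cob' carr')
         <-> is_classical D neg)).
Proof.
  destruct Hprim as [Pm1 [Pm2 Pm3]].
  destruct Hneg as [N1 [N2 [N3 N4]]].
  destruct Hcomp as [T1 [T2 [T3 T4]]].
  assert (meet_top : forall A (x : Pr D A), meet A (top A) x = x).
  { intros A x. apply le_antisym. apply (Pm1 _ _ _).
    apply Pm2. apply T1. apply le_refl. }
  assert (meet_topr : forall A (x : Pr D A), meet A x (top A) = x).
  { intros A x. apply le_antisym. apply (Pm1 _ _ _).
    apply Pm2. apply le_refl. apply T1. }
  assert (meet_comm : forall A (x y : Pr D A), meet A x y = meet A y x).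
  { intros A x y. apply le_antisym; apply Pm2; apply (Pm1 _ _ _). }
  assert (neg_bot : forall A, neg A (bot A) = top A).
  { intros A. apply le_antisym. apply T1. apply N2. apply le_antisym.
    apply (Pm1 _ _ _). apply N1. }
  assert (neg_top : forall A, neg A (top A) = bot A).
  { intros A. rewrite <- (meet_topr A (neg A (top A))). apply N2. apply le_refl. }
  assert (neg_anti : forall A (a b : Pr D A), le a b -> le (neg A b) (neg A a)).
  { intros A a b Hab. apply N2. apply le_antisym; [| apply N1].
    assert (E : meet A (meet A (neg A b) a) b = bot A).
    { apply N2. exact (proj1 (Pm1 _ _ _)). }
    rewrite <- E. apply Pm2. apply le_refl. eapply le_trans. exact (proj2 (Pm1 _ _ _)). exact Hab. }
  assert (dn : forall A (a : Pr D A), le a (neg A (neg A a))).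
  { intros A a. apply N2. rewrite meet_comm. apply N2. apply le_refl. }
  assert (topeq : forall A (x : Pr D A), le (top A) x -> x = top A).
  { intros A x H. apply le_antisym. apply T1. exact H. }
  assert (botpull : forall A (a : Pr D A),
             reindex (carr A (neg A a)) a = bot _).
  { intros A a. set (x := reindex (carr A (neg A a)) a).
    assert (H : neg _ x = top _). { unfold x. rewrite <- N4. apply T3. }
    rewrite <- (meet_top _ x). apply N2. rewrite H. apply le_refl. }
  assert (I : has_cocomprehension D bot (fun A a => cob A (neg A a))
                            (fun A a => carr A (neg A a))).
  { split; [exact N1|]. split; [exact botpull|]. split.
    - intros A a Y f Hf. apply T4. rewrite N4, Hf. apply neg_bot.
    - split.
      + intros A a Z u v Huv.
        assert (Hf : reindex (comp (carr A (neg A a)) u) (neg A a) = top Z).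
        { rewrite reindex_comp, T3. apply T2. }
        destruct (T4 _ _ _ _ Hf) as [k [_ Hk]].
        rewrite <- (Hk u eq_refl). apply Hk. exact Huv.
      + intros A a b Hab. simpl.
        destruct (T4 A (neg A a) _ (carr A (neg A b))) as [k [Hk _]].
        { apply topeq. rewrite <- (T3 A (neg A b)). apply reindex_mono.
          apply neg_anti. exact Hab. }
        exists k. exact Hk. }
  split; [exact I|]. split.
  - intros Sigma [S1 S2]. exists Sigma. split.
    + intros A B f [a [i [Hi Hf]]]. apply S1. exists (neg B a), i. auto.
    + intros A B A' B' f k g h [a [i [Hi Hf]]] Hpb xi. apply S2; auto.
      exists (neg B a), i. auto.
  - intros Hfull. split.
    + intros [cob' [carr' [[K1 [K2 [K3 [K4 K5]]]] Kf]]] A a.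
      apply le_antisym.
      * apply Kf.
        destruct (K3 A (neg A (neg A a)) _ (carr' A a)) as [k [Hk _]].
        { rewrite !N4, K2, neg_bot. apply neg_top. }
        exists k. exact Hk.
      * apply dn.
    + intros Hcl. exists (fun A a => cob A (neg A a)), (fun A a => carr A (neg A a)).
      split; [exact I|].
      intros A a b Hk. rewrite <- (Hcl A a), <- (Hcl A b).
      apply neg_anti. apply Hfull. exact Hk.
Qed.
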